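(* Let $\Omega$ be a non-empty bounded open subset of $\mathbf{R}^n$ and let $f:\Omega\to\mathbf{R}^n$ be a $C^1$ function. Then at least one of the following holds: (e1) $f$ satisfies the convex hull-like property in $\Omega$; (e2) there exists a non-empty open set $X\subseteq\Omega$ with $\overline{X}\subseteq\Omega$ such that for every continuous function $g:\Omega\to\mathbf{R}^n$ which is $C^1$ in $X$, there exists $\tilde\lambda\ge0$ such that for each $\lambda>\tilde\lambda$ one has $\det(J_{g+\lambda f}(\hat x))=0$ for some $\hat x\in X$.
   Context: $\det(J_h(x))$ denotes the Jacobian determinant of a $C^1$ map $h$ at $x$. A function $\psi:\mathbf{R}^n\to\mathbf{R}$ is quasi-convex if for each $r\in\mathbf{R}$ the set $\psi^{-1}(]-\infty,r])$ is convex. A continuous function $f:\Omega\to\mathbf{R}^n$ satisfies the convex hull-like property in $\Omega$ if for every continuous quasi-convex $\psi:\mathbf{R}^n\to\mathbf{R}$ there exists $x^*\in\partial\Omega$ such that $\limsup_{x\to x^*,\,x\in\Omega}\psi(f(x))=\sup_{x\in\Omega}\psi(f(x))$. *)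

(* Defs.v *)
From HB Require Import structures.
From mathcomp Require Import all_boot all_order all_algebra.
From mathcomp Require Import all_classical all_reals all_analysis.
Set Implicit Arguments. Unset Strict Implicit. Unset Printing Implicit Defensive.
Import Order.TTheory GRing.Theory Num.Theory.
Import numFieldNormedType.Exports.
Local Open Scope classical_set_scope.
Local Open Scope ring_scope.

Definition boundary (R : realType) (n : nat) (A : set 'rV[R]_n) : set 'rV[R]_n :=
  closure A `\` A°.

Definition quasi_convex (R : realType) (n : nat) (psi : 'rV[R]_n -> R) : Prop :=
  forall (r : R) (x y : 'rV[R]_n) (t : R), 0 <= t -> t <= 1 ->
    psi x <= r -> psi y <= r -> psi (t *: x + (1 - t) *: y) <= r.

Definition C1_on (R : realType) (n : nat) (A : set 'rV[R]_n)
    (h : 'rV[R]_n -> 'rV[R]_n) : Prop :=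
  (forall x, A x -> differentiable h x) /\
  (forall x, A x -> {for x, continuous (fun y => jacobian h y)}).

Definition continuous_on (R : realType) (n : nat) (A : set 'rV[R]_n)
    (h : 'rV[R]_n -> 'rV[R]_n) : Prop :=
  forall x, A x -> {for x, continuous h}.

Definition convex_hull_like (R : realType) (n : nat) (Omega : set 'rV[R]_n)
    (f : 'rV[R]_n -> 'rV[R]_n) : Prop :=
  forall psi : 'rV[R]_n -> R, continuous psi -> quasi_convex psi ->
    exists2 xs, boundary Omega xs &
      limf_esup (fun x => ((psi (f x))%:E)%E) (within Omega (nbhs xs)) =
      ereal_sup [set ((psi (f x))%:E)%E | x in Omega].

(* Main.v *)
Set Warnings "-all".
Require Import Defs.
From HB Require Import structures.
From mathcomp Require Import all_boot all_order all_algebra.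
From mathcomp Require Import all_classical all_reals all_analysis.
From mathcomp Require Import ring lra.
Import Order.TTheory GRing.Theory Num.Theory.
Import numFieldNormedType.Exports.
Local Open Scope classical_set_scope.
Local Open Scope ring_scope.
Section Dot.
Context {R : realType} {n : nat}.
Implicit Types (y z u : 'rV[R]_n).

Definition dotv y u : R := \sum_i y ord0 i * u ord0 i.

Lemma dotDl y z u : dotv (y + z) u = dotv y u + dotv z u.
Proof. by rewrite /dotv -big_split /=; apply: eq_bigr => i _; rewrite mxE mulrDl. Qed.

Lemma dotZl (a : R) y u : dotv (a *: y) u = a * dotv y u.
Proof. by rewrite /dotv mulr_sumr; apply: eq_bigr => i _; rewrite mxE mulrA. Qed.

Lemma dotNl y u : dotv (- y) u = - dotv y u.
Proof. by rewrite -scaleN1r dotZl mulN1r. Qed.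

Lemma dotBl y z u : dotv (y - z) u = dotv y u - dotv z u.
Proof. by rewrite dotDl dotNl. Qed.

Lemma dotC y u : dotv y u = dotv u y.
Proof. by rewrite /dotv; apply: eq_bigr => i _; rewrite mulrC. Qed.

Lemma dotDr y z u : dotv u (y + z) = dotv u y + dotv u z.
Proof. by rewrite dotC dotDl !(dotC u). Qed.

Lemma dotZr (a : R) y u : dotv u (a *: y) = a * dotv u y.
Proof. by rewrite dotC dotZl dotC. Qed.

Lemma dotBr y z u : dotv u (y - z) = dotv u y - dotv u z.
Proof. by rewrite dotC dotBl !(dotC u). Qed.

Lemma dot_ge0 y : 0 <= dotv y y.
Proof. by apply: sumr_ge0 => i _; rewrite -expr2; exact: sqr_ge0. Qed.

Lemma dot_gt0 y : y != 0 -> 0 < dotv y y.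
Proof.
move=> y0; rewrite lt_def dot_ge0 andbT; apply/negP => /eqP.
move/psumr_eq0P => H; apply/negP: y0; rewrite negbK; apply/eqP/rowP => i.
have {}H := H (fun i _ => ltac:(rewrite -expr2; exact: sqr_ge0)).
rewrite mxE; have := H i isT => /eqP; rewrite mulf_eq0 orbb => /eqP.
by rewrite (ord1 ord0) => ->.
Qed.

Lemma dot_continuous u : continuous (fun y => dotv y u).
Proof.
have -> : (fun y => dotv y u) = \sum_(i < n) (fun y : 'rV[R]_n => y ord0 i * u ord0 i).
  by apply/funext => y; rewrite /dotv fct_sumE.
elim/big_ind : _ => //.
- by move=> x; apply: cst_continuous.
- by move=> f g cf cg x; apply: continuousD; [exact: cf|exact: cg].
- move=> i _ x.
  apply: (@continuousM R _ (fun y : 'rV[R]_n => y ord0 i) (fun=> u ord0 i)).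
  + exact: coord_continuous.
  + exact: cst_continuous.
Qed.

End Dot.
Lemma aux_ineq (R : realType) (a W : R) : 0 <= W ->
  (forall t, 0 < t -> t < 1 -> 2*t*a <= t^2 * W) -> a <= 0.
Proof.
move=> W0 H; rewrite leNgt; apply/negP => a0.
set t := a / (2*a + W).
have h1 : 0 < 2*a + W by nra.
have ht : t * (2*a + W) = a by rewrite /t mulfVK // gt_eqF.
have t0 : 0 < t by rewrite /t divr_gt0.
have t1 : t < 1 by rewrite /t ltr_pdivrMr // mul1r; nra.
have := H t t0 t1. nra.
Qed.

Lemma dotvv_continuous (R : realType) n : continuous (fun y : 'rV[R]_n => dotv y y).
Proof.
have -> : (fun y => dotv y y) = \sum_(i < n) (fun y : 'rV[R]_n => y ord0 i * y ord0 i).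
  by apply/funext => y; rewrite /dotv fct_sumE.
elim/big_ind : _ => //.
- by move=> x; apply: cst_continuous.
- by move=> f g cf cg x; apply: continuousD; [exact: cf|exact: cg].
- move=> i _ x.
  apply: (@continuousM R _ (fun y : 'rV[R]_n => y ord0 i) (fun y : 'rV[R]_n => y ord0 i));
  exact: coord_continuous.
Qed.

Lemma coord_le_dot {R : realType} {n} (y : 'rV[R]_n) i : y ord0 i * y ord0 i <= dotv y y.
Proof.
rewrite /dotv (bigD1 i) //= lerDl; apply: sumr_ge0 => j _.
by rewrite -expr2 sqr_ge0.
Qed.

Lemma separation (R : realType) n (psi : 'rV[R]_n -> R) (r : R) (p k0 : 'rV[R]_n) :
  continuous psi -> quasi_convex psi -> psi k0 <= r -> r < psi p ->
  exists u c, [/\ u != 0, c < dotv p u & forall y, psi y <= r -> dotv y u <= c].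
Proof.
move=> cpsi qpsi hk0 hp.
pose d y := dotv (p - y) (p - y).
pose D := d k0.
pose K := [set y | psi y <= r /\ d y <= D].
have cd : continuous d.
  have -> : d = (fun z => dotv z z) \o (fun y => p - y) by [].
  move=> x; apply: continuous_comp; last exact: dotvv_continuous.
  exact: (@cvgB R 'rV[R]_n _ (nbhs x) _ (fun=> p) id p x (cvg_cst p) cvg_id).
have clK : closed K.
  have -> : K = (psi @^-1` [set x | x <= r]) `&` (d @^-1` [set x | x <= D]) by [].
  apply: closedI; apply: (proj1 (continuous_closedP _)) => //; exact: (@closed_le R).
have D0 : 0 <= D by exact: dot_ge0.
have boxc : compact [set v : 'rV[R]_n | forall i, `[p ord0 i - (1 + D), p ord0 i + (1 + D)]%classic (v ord0 i)].
  apply: (@rV_compact R n (fun i => `[p ord0 i - (1 + D), p ord0 i + (1 + D)]%classic)) => i.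
  exact: segment_compact.
have cK : compact K.
  apply: (subclosed_compact clK boxc) => y [_ dy] i /=.
  have h := coord_le_dot (p - y) i.
  have h2 : (p ord0 i - y ord0 i) * (p ord0 i - y ord0 i) <= D.
    by move: h; rewrite !mxE => h; apply: le_trans h _; exact: dy.
  rewrite in_itv /=; apply/andP; split; nra.
have K0 : K !=set0 by exists k0; split => //.
have [q qK qmin] := EVT_min_rV K0 cK (continuous_subspaceT cd).
move: (set_mem qK) => [psiq dq].
have qmin' : forall k, psi k <= r -> d q <= d k.
  move=> k hk; have [dk|dk] := leP (d k) D.
    by apply: qmin; apply: mem_set.
  by apply: le_trans dq (ltW dk).
exists (p - q), (dotv q (p - q)); split.
- apply/negP => /eqP h; have : p = q by apply/eqP; rewrite -subr_eq0 h.
  by move=> pq; move: hp; rewrite pq ltNge psiq.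
- rewrite -subr_gt0 -dotBl; apply: dot_gt0.
  apply/negP => /eqP h; have : p = q by apply/eqP; rewrite -subr_eq0 h.
  by move=> pq; move: hp; rewrite pq ltNge psiq.
- move=> k hk; rewrite -subr_le0 -dotBl.
  have E : forall (u w : 'rV[R]_n) t, dotv (u - t *: w) (u - t *: w) =
      dotv u u - 2 * t * dotv w u + t ^ 2 * dotv w w.
    move=> u w t; rewrite dotBl !dotBr !dotZl !dotZr (dotC u w); ring.
  apply: (@aux_ineq _ _ (dotv (k - q) (k - q)) (dot_ge0 _)) => t t0 t1.
  have hz : psi (t *: k + (1 - t) *: q) <= r by apply: qpsi => //; [exact: ltW | exact: ltW].
  have := qmin' _ hz; rewrite /d.
  have -> : p - (t *: k + (1 - t) *: q) = (p - q) - t *: (k - q).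
    by apply/rowP => i; rewrite !mxE; ring.
  rewrite E; nra.
Qed.
Lemma near_dnbhs0 (R : realType) (P : R -> Prop) :
  (\forall t \near 0^', P t) -> exists2 e : R, 0 < e & P e /\ P (- e).
Proof.
move=> /nbhs_ballP [e e0 He]; exists (e / 2); first by rewrite divr_gt0.
have e0' : 0 < e := e0.
split; apply: He.
- by rewrite /ball /= sub0r normrN gtr0_norm ?divr_gt0 //; lra.
- by rewrite gt_eqF // divr_gt0.
- by rewrite /ball /= sub0r opprK gtr0_norm ?divr_gt0 //; lra.
- by rewrite oppr_eq0 gt_eqF // divr_gt0.
Qed.

Lemma deriv_cvg (R : realType) n (h : 'rV[R]_n -> 'rV[R]_n) c v : differentiable h c ->
 (fun t : R => t^-1 *: (h (t *: v + c) - h c)) @ 0^' --> 'D_v h c.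
Proof. move=> dh. have := @diff_derivable _ _ _ _ _ v dh. rewrite /derivable => /cvg_ex [l Hl].
have := cvg_lim _ Hl. rewrite -/(derive h c v) => E. rewrite -E in Hl. exact: Hl. exact: norm_hausdorff.
Qed.
Lemma fermat (R : realType) n (h : 'rV[R]_n -> 'rV[R]_n) (X : set 'rV[R]_n) (c u : 'rV[R]_n) :
  open X -> X c -> differentiable h c ->
  (forall y, X y -> dotv (h y) u <= dotv (h c) u) ->
  forall v, dotv (v *m jacobian h c) u = 0.
Proof.
move=> oX Xc dh hmax v.
rewrite -deriveEjacobian //.
set L := dotv ('D_v h c) u.
pose Phi y := dotv (h y) u.
have HL : (fun t : R => t^-1 * (Phi (t *: v + c) - Phi c)) @ 0^' --> L.
  have -> : (fun t : R => t^-1 * (Phi (t *: v + c) - Phi c)) =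
    (fun y => dotv y u) \o (fun t : R => t^-1 *: (h (t *: v + c) - h c)).
    by apply/funext => t; rewrite /= dotZl dotBl.
  have := (cvg_comp _ _ (@deriv_cvg R n h c v dh) (@dot_continuous R n u _)). exact.
have HX : \forall t \near 0^', X (t *: v + c).
  have Hc : (fun t : R => t *: v + c) @ 0 --> 0 *: v + c.
    apply: cvgD; last exact: cvg_cst.
    apply: cvgZl; exact: cvg_id.
  rewrite scale0r add0r in Hc.
  have : \forall t \near 0, X (t *: v + c).
    by apply: Hc; apply: open_nbhs_nbhs; split.
  by move=> H; apply: cvg_within.
have [hL|hL|//] := ltgtP L 0.
- have H1 : \forall t \near 0^', t^-1 * (Phi (t *: v + c) - Phi c) < 0.
    exact: (@cvgr_lt R R _ _ _ _ HL 0 hL).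
  have [e e0 [[_ He]]] := @near_dnbhs0 R _ (filterI H1 HX).
  move=> [H2 He2]; exfalso.
  have : Phi (- e *: v + c) - Phi c <= 0 by rewrite subr_le0; exact: hmax.
  have : (- e)^-1 < 0 by rewrite invr_lt0 oppr_lt0.
  nra.
- have H1 : \forall t \near 0^', 0 < t^-1 * (Phi (t *: v + c) - Phi c).
    exact: (@cvgr_gt R R _ _ _ _ HL 0 hL).
  have [e e0 [[H2 He] _]] := @near_dnbhs0 R _ (filterI H1 HX).
  exfalso.
  have : Phi (e *: v + c) - Phi c <= 0 by rewrite subr_le0; exact: hmax.
  have : 0 < e^-1 by rewrite invr_gt0.
  nra.
Qed.
Lemma dotE (R : realType) n (y u : 'rV[R]_n) : dotv y u = (y *m u^T) ord0 ord0.
Proof. by rewrite /dotv !mxE; apply: eq_bigr => i _; rewrite mxE. Qed.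

Lemma det_from_dot (R : realType) n (J : 'M[R]_n) (u : 'rV[R]_n) : u != 0 ->
  (forall v, dotv (v *m J) u = 0) -> \det J = 0.
Proof.
move=> u0 H.
have HJ : J *m u^T = 0.
  apply/matrixP => i j; rewrite (ord1 j) mxE.
  have := H (delta_mx ord0 i); rewrite dotE -mulmxA.
  by rewrite -rowE !mxE.
rewrite -det_tr; apply/eqP/det0P; exists u => //.
by rewrite -[u]trmxK -trmx_mul HJ trmx0.
Qed.
Lemma bounded_sub (R : realType) n (A B : set 'rV[R]_n) : B `<=` A -> bounded_set A -> bounded_set B.
Proof.
move=> BA; apply: sub_boundedr => P HP x Bx; exact: HP _ (BA _ Bx).
Qed.

Lemma keyL (R : realType) n (Omega X : set 'rV[R]_n) (f : 'rV[R]_n -> 'rV[R]_n)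
    (u x0 : 'rV[R]_n) (delta : R) :
  open X -> X x0 -> closure X `<=` Omega -> bounded_set Omega -> u != 0 -> 0 < delta ->
  (forall x, Omega x -> {for x, continuous f}) -> (forall x, X x -> differentiable f x) ->
  (forall y, closure X y -> ~ X y -> dotv (f y) u + delta <= dotv (f x0) u) ->
  forall g : 'rV[R]_n -> 'rV[R]_n, continuous_on Omega g -> C1_on X g ->
   exists lt : R, 0 <= lt /\ forall lam : R, lt < lam ->
     exists2 xh, X xh & \det (jacobian (fun x => g x + lam *: f x) xh) = 0.
Proof.
move=> oX Xx0 clO bO u0 d0 cf df hb g cg [dg _].
set K := closure X.
have cK : compact K.
  apply: bounded_closed_compact; last exact: closed_closure.
  exact: bounded_sub clO bO.
have K0 : K !=set0 by exists x0; apply: subset_closure.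
have XK : X `<=` K by apply: subset_closure.
have cPhi : forall lam : R, {within K, continuous (fun y => dotv (g y + lam *: f y) u)}.
  move=> lam; apply: continuous_in_subspaceT => x /set_mem /clO Ox.
  apply: (@continuous_comp _ _ _ (fun y => g y + lam *: f y) (fun z => dotv z u)); last exact: dot_continuous.
  exact: (@cvgD R 'rV[R]_n _ (nbhs x) _ g (fun y => lam *: f y) (g x) (lam *: f x) (cg x Ox)
    (@cvgZl_tmp R 'rV[R]_n _ (nbhs x) _ lam f (f x) (cf x Ox))).
have cG : {within K, continuous (fun y => dotv (g y) u)}.
  apply: continuous_in_subspaceT => x /set_mem /clO Ox.
  apply: (@continuous_comp _ _ _ g (fun z => dotv z u)); last exact: dot_continuous.
  exact: cg.
have [c1 c1K Hc1] := EVT_max_rV K0 cK cG.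
have [c2 c2K Hc2] := EVT_min_rV K0 cK cG.
have x0K : x0 \in K by apply: mem_set; exact: XK.
exists ((dotv (g c1) u - dotv (g c2) u) / delta); split.
  by apply: divr_ge0 => //; [rewrite subr_ge0; exact: Hc1 | exact: ltW].
move=> lam hlam.
have [c cinK Hc] := EVT_max_rV K0 cK (cPhi lam).
have Xc : X c.
  apply: contrapT => nXc.
  have hbc := hb c (set_mem cinK) nXc.
  have h1 := Hc x0 x0K.
  have h2 := Hc1 c cinK.
  have h3 := Hc2 x0 x0K.
  move: h1; rewrite !dotDl !dotZl => h1.
  have hlam' : (dotv (g c1) u - dotv (g c2) u) < lam * delta.
    by rewrite -ltr_pdivrMr.
  have lam0 : 0 < lam.
    apply: le_lt_trans hlam; apply: divr_ge0; [rewrite subr_ge0; exact: Hc1 | exact: ltW].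
  have h4 : 0 <= lam * (dotv (f x0) u - delta - dotv (f c) u) by apply: mulr_ge0; lra.
  nra.
exists c => //.
apply: (@det_from_dot R n _ u u0).
apply: (@fermat R n _ X c u) => //.
- apply: differentiableD; first exact: dg.
  apply: differentiableZ. exact: df.
- by move=> y Xy; apply: Hc; apply: mem_set; exact: XK.
Qed.
Lemma bounded_closure (R : realType) n (A : set 'rV[R]_n) :
  bounded_set A -> bounded_set (closure A).
Proof.
move=> /= bA; rewrite /= /bounded_near; near=> M => x clx.
have HM : forall y, A y -> `|y| <= M by near: M.
have : closure A `<=` closed_ball_ Num.norm (0 : 'rV[R]_n) M.
  rewrite closureE; apply: smallest_sub; first exact: closed_closed_ball_.
  by move=> y Ay; rewrite /closed_ball_ /= sub0r normrN; exact: HM.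
by move=> /(_ x clx); rewrite /closed_ball_ /= sub0r normrN.
Unshelve. all: by end_near.
Qed.
Lemma stepA (R : realType) n (Omega : set 'rV[R]_n) (F : 'rV[R]_n -> R) (x00 : 'rV[R]_n) :
  Omega x00 -> open Omega -> bounded_set Omega ->
  (forall xs, boundary Omega xs ->
     limf_esup (fun x => ((F x)%:E)%E) (within Omega (nbhs xs)) <>
     ereal_sup [set ((F x)%:E)%E | x in Omega]) ->
  exists r : R, (r%:E < ereal_sup [set ((F x)%:E)%E | x in Omega])%E /\
    closure [set x | Omega x /\ r < F x] `<=` Omega.
Proof.
move=> Ox00 oO bO Hb.
set s := ereal_sup _.
pose A r := [set x | Omega x /\ r < F x].
apply: contrapT => HA.
have HA' : forall r, (r%:E < s)%E -> exists y, closure (A r) y /\ ~ Omega y.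
  move=> r rs; apply: contrapT => H; apply: HA; exists r; split => // y cy.
  by apply: contrapT => nOy; apply: H; exists y.
have Fs : forall x, Omega x -> ((F x)%:E <= s)%E.
  by move=> x Ox; apply: ereal_sup_ubound; exists x.
pose D := [set r : R | (r%:E < s)%E].
pose B r := closure (A r) `&` ~` Omega.
have AS : forall i j, i <= j -> A j `<=` A i.
  by move=> i j ij x [Ox jx]; split => //; exact: le_lt_trans ij jx.
have D0 : D (F x00 - 1).
  rewrite /D /=; apply: lt_le_trans (Fs _ Ox00); rewrite lte_fin; lra.
have FB : Filter (filter_from D B).
  apply: filter_from_filter; first by exists (F x00 - 1).
  move=> i j Di Dj; have [ij|ij] := leP i j.
  - exists j => // x [clx nOx]; split; split => //.
    by apply: closure_subset clx; apply: AS.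
  - exists i => // x [clx nOx]; split; split => //.
    by apply: closure_subset clx; apply: AS; exact: ltW.
have PFB : ProperFilter (filter_from D B).
  apply: filter_from_proper => i Di; have [y [cy nOy]] := HA' i Di.
  by exists y.
have cK : compact (closure Omega).
  by apply: bounded_closed_compact; [exact: bounded_closure | exact: closed_closure].
have FK : filter_from D B (closure Omega).
  exists (F x00 - 1) => // y [cy _]; apply: closure_subset cy => x [] //.
have [y [cOy cly]] := cK _ PFB FK.
have Bcl : forall r, D r -> closure (A r) y /\ ~ Omega y.
  move=> r Dr.
  have clB : closed (B r) by apply: closedI; [exact: closed_closure | exact: open_closedC].
  have : closure (B r) y.
    by move=> N Ny; have [z [Bz Nz]] := cly (B r) N (ex_intro2 _ _ r Dr (@subset_refl _ _)) Ny; exists z.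
  by rewrite -(proj1 (closure_id _) clB).
have bnd : boundary Omega y.
  split => //; rewrite (proj1 (interior_id _) oO).
  by have [_ ] := Bcl _ D0.
apply: (Hb y bnd); apply/eqP; rewrite eq_le; apply/andP; split.
- apply: ereal_inf_lbound; exists Omega => //; exact: withinT.
- apply/ereal_infP => _ [V HV <-].
  rewrite leNgt; apply/negP => Hlt.
  have [r [Dr Hr]] : exists r, D r /\ (ereal_sup ((fun x => (F x)%:E) @` V) <= r%:E)%E.
    move: Hlt; case E: (ereal_sup _) => [r'| |] Hlt.
    + by exists r'; split.
    + by move: Hlt; rewrite ltNge leey.
    + by exists (F x00 - 1); split => //; rewrite leNye.
  have [cly' _] := Bcl r Dr.
  have [x [[Ox rx] Vx]] := cly' _ HV.
  have := Vx Ox => Vx'.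
  have : ((F x)%:E <= r%:E)%E.
    apply: le_trans Hr; apply: ereal_sup_ubound; exists x => //.
  by rewrite lee_fin leNgt rx.
Qed.
Theorem theorem3 (R : realType) (n : nat) (hn : (0 < n)%N)
    (Omega : set 'rV[R]_n) (f : 'rV[R]_n -> 'rV[R]_n) :
  Omega !=set0 -> open Omega -> bounded_set Omega -> C1_on Omega f ->
  convex_hull_like Omega f \/
  exists X : set 'rV[R]_n,
    [/\ X !=set0, open X, closure X `<=` Omega &
      forall g : 'rV[R]_n -> 'rV[R]_n,
        continuous_on Omega g -> C1_on X g ->
        exists lt : R, 0 <= lt /\
          forall lam : R, lt < lam ->
            exists2 xh, X xh & \det (jacobian (fun x => g x + lam *: f x) xh) = 0].
Proof.
move=> [x00 Ox00] oO bO [dfO _].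
have cf : forall x, Omega x -> {for x, continuous f}.
  by move=> x Ox; exact: differentiable_continuous (dfO x Ox).
have [ch|nch] := pselect (convex_hull_like Omega f); first by left.
right.
have [psi [cpsi qpsi Hb]] : exists psi : 'rV[R]_n -> R,
  [/\ continuous psi, quasi_convex psi & forall xs, boundary Omega xs ->
     limf_esup (fun x => ((psi (f x))%:E)%E) (within Omega (nbhs xs)) <>
     ereal_sup [set ((psi (f x))%:E)%E | x in Omega]].
  apply: contrapT => H; apply: nch => psi cpsi qpsi.
  apply: contrapT => H2; apply: H; exists psi; split => // xs bxs E; by apply: H2; exists xs.
have [r [rs clA]] := @stepA R n Omega (fun x => psi (f x)) x00 Ox00 oO bO Hb.
have [x0 Ox0 rx0] : exists2 x0, Omega x0 & r < psi (f x0).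
  have [y [x Ox xy] ry] := ereal_sup_gt rs; exists x => //.
  by move: ry; rewrite -xy lte_fin.
case: (pselect (exists k0, psi k0 <= r)) => [[k0 hk0]|nK].
- have [u [c [u0 cu Hu]]] := @separation R n psi r (f x0) k0 cpsi qpsi hk0 rx0.
  pose X := [set x | Omega x /\ c < dotv (f x) u].
  have XA : X `<=` [set x | Omega x /\ r < psi (f x)].
    move=> x [Ox cx]; split => //; rewrite ltNge; apply/negP => hle.
    by have := Hu _ hle; lra.
  have clX : closure X `<=` Omega by move=> y cy; apply: clA; exact: closure_subset XA _ cy.
  have oX : open X.
    rewrite openE => x [Ox cx]; rewrite /interior.
    have hc : (fun y => dotv (f y) u) @ x --> dotv (f x) u.
      exact: (@continuous_comp _ _ _ f (fun z => dotv z u) x (cf x Ox) (dot_continuous u _)).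
    have H1 := @cvgr_gt R _ _ _ _ _ hc c cx. have {}H1 : \forall t \near x, c < dotv (f t) u. by apply: H1.
    have H2 : nbhs x Omega by apply: open_nbhs_nbhs; split.
    exact: (filterI H2 H1).
  exists X; split => //.
  + by exists x0; split.
  + move=> g cg C1g.
    apply: (@keyL R n Omega X f u x0 (dotv (f x0) u - c)) => //. all: try (by split).
    * by rewrite subr_gt0.
    * by move=> x [Ox _]; exact: (dfO x Ox).
    * move=> y cy nXy; have Oy := clX _ cy.
      have : ~ (c < dotv (f y) u) by move=> h; apply: nXy.
      move/negP; rewrite -leNgt => h; lra.
- have OA : Omega `<=` [set x | Omega x /\ r < psi (f x)].
    move=> x Ox; split => //; rewrite ltNge; apply/negP => h; apply: nK; by exists (f x).
  have clO : closure Omega `<=` Omega by move=> y cy; apply: clA; exact: closure_subset OA _ cy.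
  have u0 : (const_mx 1 : 'rV[R]_n) != 0.
    apply/negP => /eqP /rowP /(_ (Ordinal hn)); rewrite !mxE => /eqP; by rewrite oner_eq0.
  exists Omega; split => //; first by exists x00.
  move=> g cg C1g.
  apply: (@keyL R n Omega Omega f (const_mx 1) x00 1) => //.
  by move=> y cy nOy; exfalso; apply: nOy; exact: clO.
Qed.
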